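(* Let $(W,S)$ be a Coxeter system, $w\in W\setminus\{1\}$ and $k\in I$ with $k\notin D_R(w)$. If $D_R(ws_k)=\{k\}$, then $$\mathrm{Annex}(ws_k)=\mathrm{Annex}(w)\cdot W_{I\setminus\{k\}}=\{xy: x\in\mathrm{Annex}(w),\ y\in W_{I\setminus\{k\}}\}.$$
   Context: $(W,S)$ a Coxeter system with $S=\{s_i:i\in I\}$; $\ell$ the length; $\le$ the Bruhat order; $D_R(w)=\{i\in I:\ell(ws_i)<\ell(w)\}$ is the right descent set; $W_{J}=\langle s_i:i\in J\rangle$ for $J\subseteq I$. $\mathrm{Annex}(w)=\{y\in W: w\not\le y\}$. *)

(* Defs.v *)
From Stdlib Require Import List Arith Relations ClassicalEpsilon.
Import ListNotations.

Record Group := {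
  gcar :> Type;
  gmul : gcar -> gcar -> gcar;
  gone : gcar;
  ginv : gcar -> gcar;
  gmulA : forall x y z, gmul x (gmul y z) = gmul (gmul x y) z;
  gmul1l : forall x, gmul gone x = x;
  gmulVl : forall x, gmul (ginv x) x = gone
}.
Arguments gmul {g}.
Arguments gone {g}.
Arguments ginv {g}.

Fixpoint gpow {G : Group} (x : G) (n : nat) : G :=
  match n with O => gone | S n => gmul x (gpow x n) end.

Definition is_hom {G H : Group} (f : G -> H) : Prop :=
  forall x y, f (gmul x y) = gmul (f x) (f y).

(* Coxeter matrix over index type I; m i j = 0 encodes m(i,j) = infinity. *)
Definition coxeter_matrix {I : Type} (m : I -> I -> nat) : Prop :=
  (forall i, m i i = 1) /\ (forall i j, m i j = m j i) /\
  (forall i j, i <> j -> m i j <> 1).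

Definition coxeter_relations {I : Type} (m : I -> I -> nat) {G : Group} (f : I -> G) : Prop :=
  forall i j, m i j <> 0 -> gpow (gmul (f i) (f j)) (m i j) = gone.

(* (W, {s_i}) is a Coxeter system: W has the Coxeter presentation with generators s_i,
   i.e. s satisfies the relations and has the universal property of the presented group. *)
Definition is_coxeter_system (W : Group) (I : Type) (s : I -> W) : Prop :=
  exists m : I -> I -> nat, coxeter_matrix m /\ coxeter_relations m s /\
    forall (G : Group) (f : I -> G), coxeter_relations m f ->
      exists! phi : W -> G, is_hom phi /\ forall i, phi (s i) = f i.

Section Coxeter.
Context {W : Group} {I : Type} (s : I -> W).

Definition word_eval (l : list I) : W := fold_right (fun i x => gmul (s i) x) gone l.

Definition is_length (w : W) (n : nat) : Prop :=
  (exists l, length l = n /\ word_eval l = w) /\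
  (forall l, word_eval l = w -> n <= length l).

Definition coxlen (w : W) : nat := epsilon (inhabits 0) (is_length w).

Definition reflection (t : W) : Prop := exists x i, t = gmul (gmul x (s i)) (ginv x).

Definition bruhat_step (u v : W) : Prop :=
  exists t, reflection t /\ v = gmul u t /\ coxlen u < coxlen v.
Definition bruhat_le (u v : W) : Prop := clos_refl_trans W bruhat_step u v.

Definition in_DR (w : W) (i : I) : Prop := coxlen (gmul w (s i)) < coxlen w.

Definition Annex (w : W) (y : W) : Prop := ~ bruhat_le w y.

Inductive parabolic (J : I -> Prop) : W -> Prop :=
| par_one : parabolic J gone
| par_gen j : J j -> parabolic J (s j)
| par_mul x y : parabolic J x -> parabolic J y -> parabolic J (gmul x y)
| par_inv x : parabolic J x -> parabolic J (ginv x).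

End Coxeter.

(* Main.v *)
Require Import Defs.
From Stdlib Require Import List Arith Relations ClassicalEpsilon Classical Lia Bool FunctionalExtensionality.
Import ListNotations.

Section GroupLemmas.
Context {G : Group}.
Lemma mulA (x y z : G) : gmul x (gmul y z) = gmul (gmul x y) z.
Proof. apply gmulA. Qed.
Lemma mul1l (x : G) : gmul gone x = x.
Proof. apply gmul1l. Qed.
Lemma mulVl (x : G) : gmul (ginv x) x = gone.
Proof. apply gmulVl. Qed.
Lemma idem1 (x : G) : gmul x x = x -> x = gone.
Proof.
  intros H. rewrite <- (mul1l x). rewrite <- (mulVl x) at 1.
  rewrite <- mulA, H. apply mulVl.
Qed.
Lemma mulVr (x : G) : gmul x (ginv x) = gone.
Proof.
  apply idem1. rewrite <- mulA. rewrite (mulA (ginv x) x (ginv x)).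
  rewrite mulVl, mul1l. reflexivity.
Qed.
Lemma mul1r (x : G) : gmul x gone = x.
Proof. rewrite <- (mulVl x), mulA, mulVr, mul1l. reflexivity. Qed.
Lemma mulKl (x y : G) : gmul (ginv x) (gmul x y) = y.
Proof. rewrite mulA, mulVl, mul1l. reflexivity. Qed.
Lemma mulKr (x y : G) : gmul x (gmul (ginv x) y) = y.
Proof. rewrite mulA, mulVr, mul1l. reflexivity. Qed.
Lemma mulKr' (x y : G) : gmul (gmul y x) (ginv x) = y.
Proof. rewrite <- mulA, mulVr, mul1r. reflexivity. Qed.
Lemma mulKl' (x y : G) : gmul (gmul y (ginv x)) x = y.
Proof. rewrite <- mulA, mulVl, mul1r. reflexivity. Qed.
Lemma cancel_l (x y z : G) : gmul x y = gmul x z -> y = z.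
Proof. intros H. rewrite <- (mulKl x y), H, mulKl. reflexivity. Qed.
Lemma cancel_r (x y z : G) : gmul y x = gmul z x -> y = z.
Proof. intros H. rewrite <- (mulKr' x y), H, mulKr'. reflexivity. Qed.
Lemma inv_uniq (x y : G) : gmul x y = gone -> ginv x = y.
Proof. intros H. rewrite <- (mulKl x y), H, mul1r. reflexivity. Qed.
Lemma invK (x : G) : ginv (ginv x) = x.
Proof. apply inv_uniq. apply mulVl. Qed.
Lemma invM (x y : G) : ginv (gmul x y) = gmul (ginv y) (ginv x).
Proof. apply inv_uniq. rewrite <- mulA, (mulA y), mulVr, mul1l, mulVr. reflexivity. Qed.
Lemma inv1 : ginv (@gone G) = gone.
Proof. apply inv_uniq. apply mul1l. Qed.
Lemma gpow_Sr (x : G) n : gpow x (S n) = gmul (gpow x n) x.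
Proof.
  induction n; simpl. rewrite mul1l, mul1r. reflexivity.
  simpl in IHn. rewrite IHn at 1. rewrite mulA. reflexivity.
Qed.
Lemma gpow_add (x : G) n m : gpow x (n + m) = gmul (gpow x n) (gpow x m).
Proof. induction n; simpl. rewrite mul1l; reflexivity. rewrite IHn, mulA; reflexivity. Qed.
End GroupLemmas.

Lemma hom1 {G H : Group} (f : G -> H) : is_hom f -> f gone = gone.
Proof. intros Hf. apply idem1. rewrite <- Hf, mul1l. reflexivity. Qed.
Lemma hom_inv {G H : Group} (f : G -> H) x : is_hom f -> f (ginv x) = ginv (f x).
Proof. intros Hf. symmetry. apply inv_uniq. rewrite <- Hf, mulVr. apply hom1, Hf. Qed.



Lemma sig_eq {A : Type} {P : A -> Prop} (a b : {x | P x}) : proj1_sig a = proj1_sig b -> a = b.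
Proof. destruct a, b; simpl; intros ->. f_equal. apply proof_irrelevance. Qed.

Record Perm (X : Type) := mkPerm { pf : X -> X; pg : X -> X;
  pfg : forall r, pf (pg r) = r; pgf : forall r, pg (pf r) = r }.
Arguments mkPerm {X}. Arguments pf {X}. Arguments pg {X}. Arguments pfg {X}. Arguments pgf {X}.
Lemma perm_eq {X} (p q : Perm X) : pf p = pf q -> p = q.
Proof.
  destruct p as [f g H1 H2], q as [f' g' H1' H2']; simpl; intros <-.
  assert (g = g') as <-.
  { apply functional_extensionality. intros r. rewrite <- (H1' r) at 1. rewrite H2. reflexivity. }
  f_equal; apply proof_irrelevance.
Qed.
Definition pmul {X} (p q : Perm X) : Perm X.
Proof.
  refine (mkPerm (fun r => pf p (pf q r)) (fun r => pg q (pg p r)) _ _).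
  - intros r. rewrite (pfg q), (pfg p). reflexivity.
  - intros r. rewrite (pgf p), (pgf q). reflexivity.
Defined.
Definition pone X : Perm X := mkPerm (fun r => r) (fun r => r) (fun r => eq_refl) (fun r => eq_refl).
Definition pinv {X} (p : Perm X) : Perm X := mkPerm (pg p) (pf p) (pgf p) (pfg p).
Definition PermG (X : Type) : Group.
Proof.
  refine {| gcar := Perm X; gmul := pmul; gone := pone X; ginv := pinv |}.
  - intros; apply perm_eq; reflexivity.
  - intros; apply perm_eq; reflexivity.
  - intros; apply perm_eq; apply functional_extensionality; intros r; simpl; apply pgf.
Defined.
Definition invol {X} (f : X -> X) (H : forall r, f (f r) = r) : Perm X := mkPerm f f H H.

Definition dec (P : Prop) : bool := if excluded_middle_informative P then true else false.
Lemma dec_t (P : Prop) : P -> dec P = true.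
Proof. unfold dec; destruct excluded_middle_informative; tauto. Qed.
Lemma dec_f (P : Prop) : ~ P -> dec P = false.
Proof. unfold dec; destruct excluded_middle_informative; tauto. Qed.
Lemma dec_iff (P Q : Prop) : (P <-> Q) -> dec P = dec Q.
Proof. intros H. unfold dec; do 2 destruct excluded_middle_informative; tauto. Qed.
Lemma dec_spec (P : Prop) : (dec P = true <-> P).
Proof. unfold dec; destruct excluded_middle_informative; split; intros; auto; try tauto; discriminate. Qed.

Section Cox.
Context {W : Group} {I : Type} (s : I -> W) (mm : I -> I -> nat)
  (Hmat : coxeter_matrix mm) (Hrel : coxeter_relations mm s)
  (Huniv : forall (G : Group) (f : I -> G), coxeter_relations mm f ->
      exists! phi : W -> G, is_hom phi /\ forall i, phi (s i) = f i).

Notation ev := (word_eval s).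

Lemma ss i : gmul (s i) (s i) = gone.
Proof.
  destruct Hmat as [H1 _]. pose proof (Hrel i i) as H. rewrite H1 in H.
  simpl in H. rewrite mul1r in H. apply H; discriminate.
Qed.
Lemma sinv i : ginv (s i) = s i.
Proof. apply inv_uniq, ss. Qed.
Lemma sK i y : gmul (gmul y (s i)) (s i) = y.
Proof. rewrite <- mulA, ss, mul1r. reflexivity. Qed.
Lemma sK' i y : gmul (s i) (gmul (s i) y) = y.
Proof. rewrite mulA, ss, mul1l. reflexivity. Qed.

Lemma ev_nil : ev [] = gone.
Proof. reflexivity. Qed.
Lemma ev_cons i l : ev (i :: l) = gmul (s i) (ev l).
Proof. reflexivity. Qed.
Lemma ev_app l1 l2 : ev (l1 ++ l2) = gmul (ev l1) (ev l2).
Proof.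
  induction l1; simpl. rewrite mul1l; reflexivity.
  rewrite IHl1, mulA. reflexivity.
Qed.
Lemma ev_snoc l i : ev (l ++ [i]) = gmul (ev l) (s i).
Proof. rewrite ev_app. simpl. rewrite mul1r. reflexivity. Qed.
Lemma ev_rev l : ev (rev l) = ginv (ev l).
Proof.
  induction l; simpl. symmetry; apply inv1.
  rewrite ev_snoc, IHl, invM, sinv. reflexivity.
Qed.

Definition gen (x : W) := exists l, ev l = x.
Lemma gen_mul x y : gen x -> gen y -> gen (gmul x y).
Proof. intros [l1 <-] [l2 <-]. exists (l1 ++ l2). apply ev_app. Qed.
Lemma gen_inv x : gen x -> gen (ginv x).
Proof. intros [l <-]. exists (rev l). apply ev_rev. Qed.
Lemma gen_one : gen gone.
Proof. exists []. reflexivity. Qed.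
Lemma gen_s i : gen (s i).
Proof. exists [i]. simpl. apply mul1r. Qed.

Definition SG := {x : W | gen x}.
Definition sg_mul (a b : SG) : SG :=
  exist _ (gmul (proj1_sig a) (proj1_sig b)) (gen_mul _ _ (proj2_sig a) (proj2_sig b)).
Definition sg_inv (a : SG) : SG := exist _ (ginv (proj1_sig a)) (gen_inv _ (proj2_sig a)).
Definition sg_one : SG := exist _ gone gen_one.
Definition SubG : Group.
Proof.
  refine {| gcar := SG; gmul := sg_mul; gone := sg_one; ginv := sg_inv |}.
  - intros; apply sig_eq; simpl; apply mulA.
  - intros; apply sig_eq; simpl; apply mul1l.
  - intros; apply sig_eq; simpl; apply mulVl.
Defined.

Lemma generation (w : W) : gen w.
Proof.
  pose (f := fun i => (exist _ (s i) (gen_s i) : SubG)).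
  assert (Hf : coxeter_relations mm f).
  { intros i j Hij. apply sig_eq. 
    assert (E : forall (x : SubG) n, proj1_sig (gpow x n) = gpow (proj1_sig x) n).
    { intros x n; induction n; simpl; [reflexivity| rewrite <- IHn; reflexivity]. }
    rewrite E. simpl. apply Hrel, Hij. }
  destruct (Huniv SubG f Hf) as [phi [[Hphi Hphis] _]].
  destruct (Huniv W s Hrel) as [phi0 [_ Hu]].
  assert (E1 : (fun x => proj1_sig (phi x)) = phi0).
  { symmetry; apply Hu. split.
    - intros x y. rewrite Hphi. reflexivity.
    - intros i. rewrite Hphis. reflexivity. }
  assert (E2 : (fun x : W => x) = phi0).
  { symmetry; apply Hu. split. intros x y; reflexivity. intros; reflexivity. }
  assert (E : proj1_sig (phi w) = w).
  { pose proof (f_equal (fun F => F w) (eq_trans E1 (eq_sym E2))) as HH. exact HH. }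
  rewrite <- E. apply (proj2_sig (phi w)).
Qed.

Lemma ex_len w : exists n, is_length s w n.
Proof.
  destruct (generation w) as [l0 Hl0].
  assert (H : forall n, (exists l, length l <= n /\ ev l = w) -> exists m, is_length s w m).
  { induction n as [n IH] using lt_wf_ind. intros [l [Hl Hw]].
    destruct (classic (exists l', length l' < length l /\ ev l' = w)) as [[l' [H1 H2]]|Hno].
    - apply (IH (length l')). lia. exists l'. split; auto.
    - exists (length l). split. exists l; auto.
      intros l' Hl'. destruct (le_lt_dec (length l) (length l')); auto.
      exfalso. apply Hno. exists l'; auto. }
  apply (H (length l0)). exists l0; auto.
Qed.
Notation len := (coxlen s).
Lemma len_spec w : is_length s w (len w).
Proof. unfold coxlen. apply epsilon_spec, ex_len. Qed.
Lemma len_le l : len (ev l) <= length l.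
Proof. exact (proj2 (len_spec (ev l)) l eq_refl). Qed.
Lemma len_word w : exists l, length l = len w /\ ev l = w.
Proof. apply (proj1 (len_spec w)). Qed.
Lemma len_mul_s_le w i : len (gmul w (s i)) <= S (len w).
Proof.
  destruct (len_word w) as [l [H1 H2]]. subst w. rewrite <- ev_snoc.
  etransitivity. apply len_le. rewrite length_app; simpl; lia.
Qed.
Lemma len_mul_s_ge w i : len w <= S (len (gmul w (s i))).
Proof. rewrite <- (sK i w) at 1. apply len_mul_s_le. Qed.
Lemma len_one : len gone = 0.
Proof. pose proof (len_le []). simpl in H. lia. Qed.
Lemma len0 w : len w = 0 -> w = gone.
Proof. intros H. destruct (len_word w) as [l [H1 H2]]. rewrite H in H1.
  destruct l; [exact (eq_sym H2)|discriminate]. Qed.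

Definition Z2 : Group.
Proof.
  refine {| gcar := bool; gmul := xorb; gone := false; ginv := fun b => b |}.
  - intros; destruct x, y, z; reflexivity.
  - intros; reflexivity.
  - intros; destruct x; reflexivity.
Defined.

Lemma len_parity w i : len (gmul w (s i)) <> len w.
Proof.
  assert (Hf : coxeter_relations mm (fun _ => (true : Z2))).
  { intros a b _. induction (mm a b); simpl in *; [reflexivity|]. exact IHn. }
  destruct (Huniv Z2 _ Hf) as [phi [[Hphi Hs] _]].
  assert (Hl : forall l, phi (ev l) = Nat.odd (length l)).
  { induction l; simpl. apply (hom1 phi Hphi).
    rewrite Hphi, Hs, IHl. simpl. rewrite Nat.odd_succ, <- Nat.negb_odd. reflexivity. }
  intros E.
  destruct (len_word w) as [l1 [H1 H2]]. destruct (len_word (gmul w (s i))) as [l2 [H3 H4]].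
  pose proof (Hl l2) as A. rewrite H4, Hphi, Hs, <- H2, Hl, H3, E, <- H1 in A.
  simpl in A. destruct (Nat.odd (length l1)); discriminate.
Qed.

Lemma len_s_cases w i : len (gmul w (s i)) = S (len w) \/ S (len (gmul w (s i))) = len w.
Proof. pose proof (len_parity w i). pose proof (len_mul_s_le w i). pose proof (len_mul_s_ge w i). lia. Qed.

Notation ble := (bruhat_le s).
Lemma refl_s i : reflection s (s i).
Proof. exists gone, i. rewrite inv1, mul1l, mul1r. reflexivity. Qed.
Lemma ble_refl x : ble x x.
Proof. apply rt_refl. Qed.
Lemma ble_trans x y z : ble x y -> ble y z -> ble x z.
Proof. apply rt_trans. Qed.
Lemma ble_step x t : reflection s t -> len x < len (gmul x t) -> ble x (gmul x t).
Proof. intros. apply rt_step. exists t. auto. Qed.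
Lemma ble_s x i : len x < len (gmul x (s i)) -> ble x (gmul x (s i)).
Proof. apply ble_step, refl_s. Qed.
Lemma ble_s' x i : len (gmul x (s i)) < len x -> ble (gmul x (s i)) x.
Proof. intros H. pattern x at 2. rewrite <- (sK i x). apply ble_s. rewrite sK. exact H. Qed.
Lemma ble_len x y : ble x y -> len x <= len y.
Proof. induction 1. destruct H as [t [_ [-> H]]]. lia. lia. lia. Qed.
Lemma ble_one x : ble x gone -> x = gone.
Proof. intros H. apply ble_len in H. rewrite len_one in H. apply len0. lia. Qed.
Lemma refl_conj t i : reflection s t -> reflection s (gmul (gmul (s i) t) (s i)).
Proof.
  intros [x [j ->]]. exists (gmul (s i) x), j.
  rewrite invM, sinv, !mulA. reflexivity.
Qed.


Definition R := (W * bool)%type.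
Definition pif (i : I) (r : R) : R :=
  (gmul (gmul (s i) (fst r)) (s i), xorb (snd r) (dec (fst r = s i))).
Lemma conj_s_eq i x : gmul (gmul (s i) x) (s i) = s i <-> x = s i.
Proof.
  split; intros H.
  - apply (f_equal (fun y => gmul (s i) (gmul y (s i)))) in H.
    rewrite sK, !sK' in H. exact H.
  - subst. rewrite ss, mul1l. reflexivity.
Qed.
Lemma pif_invol i r : pif i (pif i r) = r.
Proof.
  destruct r as [x e]. unfold pif; simpl. rewrite (dec_iff _ _ (conj_s_eq i x)).
  rewrite !mulA, sK, ss, mul1l. destruct e, (dec (x = s i)); reflexivity.
Qed.
Definition pi (i : I) : PermG R := invol (pif i) (pif_invol i).

Lemma conj_eq (A B x y : W) : gmul A B = gone ->
  (gmul (gmul A x) B = y <-> x = gmul (gmul B y) A).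
Proof.
  intros H. assert (H' : gmul B A = gone).
  { apply inv_uniq in H. subst B. apply mulVl. }
  split; intros E.
  - subst y. rewrite !mulA, H', mul1l, <- mulA, H', mul1r. reflexivity.
  - subst x. rewrite !mulA, H, mul1l, <- mulA, H, mul1r. reflexivity.
Qed.

Section Dihedral.
Variables (i j : I).
Let a := s i.
Let b := s j.
Let d := gmul a b.
Let c := gmul b a.
Let T r := gmul (gpow c r) b.
Fixpoint Gx (x : W) (n : nat) : bool :=
  match n with 0 => false | S n => xorb (Gx x n) (dec (x = T n)) end.
Lemma CD : gmul c d = gone.
Proof. unfold c, d, a, b. rewrite <- mulA, sK', ss. reflexivity. Qed.
Lemma DC : gmul d c = gone.
Proof. unfold c, d, a, b. rewrite <- mulA, sK', ss. reflexivity. Qed.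
Lemma DE n : gmul (gpow d n) (gpow c n) = gone.
Proof.
  induction n. apply mul1l. rewrite (gpow_Sr c n).
  change (gpow d (S n)) with (gmul d (gpow d n)).
  rewrite <- mulA, (mulA (gpow d n)), IHn, mul1l. apply DC.
Qed.
Lemma ED n : gmul (gpow c n) (gpow d n) = gone.
Proof.
  induction n. apply mul1l. rewrite (gpow_Sr c n).
  change (gpow d (S n)) with (gmul d (gpow d n)).
  rewrite <- mulA, (mulA c d), CD, mul1l. exact IHn.
Qed.
Lemma bD n : gmul b (gpow d n) = gmul (gpow c n) b.
Proof.
  induction n. simpl. rewrite mul1l, mul1r. reflexivity.
  change (gpow d (S n)) with (gmul d (gpow d n)). change (gpow c (S n)) with (gmul c (gpow c n)).
  assert (BD : gmul b d = gmul c b) by (unfold b, c, d; apply mulA).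
  rewrite (mulA b d), BD, <- mulA, IHn, mulA. reflexivity.
Qed.
Lemma form n x e : pf (gpow (gmul (pi i) (pi j)) n) (x, e) =
   (gmul (gmul (gpow d n) x) (gpow c n), xorb e (Gx x (2 * n))).
Proof.
  induction n. simpl. rewrite mul1l, mul1r, xorb_false_r. reflexivity.
  change (pf (gpow (gmul (pi i) (pi j)) (S n)) (x, e)) with
    (pif i (pif j (pf (gpow (gmul (pi i) (pi j)) n) (x, e)))).
  rewrite IHn. unfold pif; simpl fst; simpl snd.
  replace (2 * S n) with (S (S (2 * n))) by lia.
  change (Gx x (S (S (2*n)))) with (xorb (xorb (Gx x (2*n)) (dec (x = T (2*n)))) (dec (x = T (S (2*n))))).
  f_equal.
  - rewrite (gpow_Sr c n). change (gpow d (S n)) with (gmul d (gpow d n)). unfold d, c, a, b. rewrite !mulA. reflexivity.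
  - set (y := gmul (gmul (gpow d n) x) (gpow c n)).
    assert (E1 : dec (y = s j) = dec (x = T (2 * n))).
    { apply dec_iff. unfold y. rewrite (conj_eq _ _ x (s j) (DE n)).
      unfold T. rewrite <- mulA, bD, mulA, <- gpow_add.
      replace (n + n) with (2 * n) by lia. reflexivity. }
    assert (E2 : dec (gmul (gmul (s j) y) (s j) = s i) = dec (x = T (S (2 * n)))).
    { apply dec_iff. rewrite (conj_eq (s j) (s j) y (s i) (ss j)). unfold y.
      rewrite (conj_eq _ _ x _ (DE n)).
      unfold T. rewrite <- !mulA, bD. fold c.
      rewrite (mulA b a). fold c. rewrite (mulA (gpow c n) c), <- gpow_Sr, mulA, <- gpow_add.
      replace (S n + n) with (S (2 * n)) by lia. reflexivity. }
    rewrite E1, E2. try change (n + (n + 0)) with (2 * n). destruct e, (Gx x (2 * n)), (dec (x = T (2 * n))), (dec (x = T (S (2 * n)))); reflexivity.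
Qed.

Lemma Gx_add x r m : gpow c m = gone -> Gx x (r + m) = xorb (Gx x r) (Gx x m).
Proof.
  intros Hc. induction r. reflexivity.
  change (Gx x (S (r + m)) = xorb (xorb (Gx x r) (dec (x = T r))) (Gx x m)).
  simpl. rewrite IHr. unfold T. rewrite gpow_add, Hc, mul1r.
  destruct (Gx x r), (Gx x m), (dec (x = gmul (gpow c r) b)); reflexivity.
Qed.
Lemma pi_rel : mm i j <> 0 -> gpow (gmul (pi i) (pi j)) (mm i j) = gone.
Proof.
  intros Hij. assert (Hd : gpow d (mm i j) = gone) by (apply Hrel; auto).
  assert (Hc : gpow c (mm i j) = gone).
  { pose proof (DE (mm i j)) as H. rewrite Hd, mul1l in H. exact H. }
  apply perm_eq. apply functional_extensionality. intros [x e].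
  rewrite form, Hd, Hc, mul1l, mul1r.
  replace (2 * mm i j) with (mm i j + mm i j) by lia. rewrite (Gx_add _ _ _ Hc).
  destruct (Gx x (mm i j)), e; reflexivity.
Qed.
End Dihedral.


Lemma pi_rels : coxeter_relations mm pi.
Proof. intros i j H. apply pi_rel, H. Qed.

Lemma ex_phiR : exists phi : W -> PermG R, is_hom phi /\ forall i, phi (s i) = pi i.
Proof. destruct (Huniv (PermG R) pi pi_rels) as [phi [H _]]. exists phi; exact H. Qed.
Definition phiR : W -> PermG R := proj1_sig (constructive_indefinite_description _ ex_phiR).
Lemma phiR_hom : is_hom phiR.
Proof. exact (proj1 (proj2_sig (constructive_indefinite_description _ ex_phiR))). Qed.
Lemma phiR_s i : phiR (s i) = pi i.
Proof. exact (proj2 (proj2_sig (constructive_indefinite_description _ ex_phiR)) i). Qed.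

Fixpoint par (l : list I) (x : W) : bool :=
  match l with [] => false
  | i :: l' => xorb (par l' x) (dec (x = gmul (gmul (ginv (ev l')) (s i)) (ev l'))) end.

Lemma word_form l x e : pf (phiR (ev l)) (x, e) =
  (gmul (gmul (ev l) x) (ginv (ev l)), xorb e (par l x)).
Proof.
  induction l as [|i l IH].
  - simpl. rewrite (hom1 _ phiR_hom), inv1, mul1l, mul1r, xorb_false_r. reflexivity.
  - rewrite ev_cons, phiR_hom, phiR_s.
    change (pf (gmul (pi i) (phiR (ev l))) (x, e)) with (pif i (pf (phiR (ev l)) (x, e))).
    rewrite IH. unfold pif. simpl fst. simpl snd. simpl par. f_equal.
    + rewrite invM, sinv, !mulA. reflexivity.
    + rewrite (dec_iff _ _ (conj_eq _ _ x (s i) (mulVr (ev l)))).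
      destruct e, (par l x), (dec _); reflexivity.
Qed.

Definition eta (w x : W) : bool := snd (pf (phiR w) (x, false)).
Lemma eta_word l x : eta (ev l) x = par l x.
Proof. unfold eta. rewrite word_form. reflexivity. Qed.
Lemma eta_form w x e : pf (phiR w) (x, e) = (gmul (gmul w x) (ginv w), xorb e (eta w x)).
Proof. destruct (generation w) as [l <-]. rewrite eta_word. apply word_form. Qed.
Lemma eta_mul u v x : eta (gmul u v) x = xorb (eta v x) (eta u (gmul (gmul v x) (ginv v))).
Proof.
  unfold eta at 1. rewrite phiR_hom.
  change (pf (gmul (phiR u) (phiR v)) (x, false)) with (pf (phiR u) (pf (phiR v) (x, false))).
  rewrite eta_form, eta_form. reflexivity.
Qed.
Lemma eta_one x : eta gone x = false.
Proof. change gone with (ev []). rewrite eta_word. reflexivity. Qed.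
Lemma eta_s i x : eta (s i) x = dec (x = s i).
Proof. unfold eta. rewrite phiR_s. reflexivity. Qed.
Lemma eta_inv v y : eta (ginv v) (gmul (gmul v y) (ginv v)) = eta v y.
Proof.
  pose proof (eta_mul (ginv v) v y) as H. rewrite mulVl, eta_one in H.
  destruct (eta v y), (eta (ginv v) _); simpl in H; congruence.
Qed.
Lemma refl_tt t : reflection s t -> gmul t t = gone.
Proof.
  intros [x [i ->]]. rewrite <- !mulA, (mulA (ginv x) x), mulVl, mul1l, sK', mulVr. reflexivity.
Qed.
Lemma eta_tt t : reflection s t -> eta t t = true.
Proof.
  intros Ht. pose proof Ht as [x [i Et]].
  pose proof (eta_mul (gmul x (s i)) (ginv x) t) as H. rewrite <- Et in H. rewrite H.
  rewrite invK.
  assert (E1 : gmul (gmul (ginv x) t) x = s i).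
  { rewrite Et, !mulA, mulVl, mul1l, <- mulA, mulVl, mul1r. reflexivity. }
  rewrite E1, eta_mul, eta_s, (dec_t (s i = s i) eq_refl), sinv, sK.
  assert (E2 : eta (ginv x) t = eta x (s i)).
  { rewrite Et, <- (eta_inv x (s i)). reflexivity. }
  rewrite E2. destruct (eta x (s i)); reflexivity.
Qed.
Lemma eta_wt w t : reflection s t -> eta (gmul w t) t = negb (eta w t).
Proof.
  intros Ht. rewrite eta_mul, eta_tt by auto.
  assert (E : gmul (gmul t t) (ginv t) = t).
  { rewrite refl_tt by auto. rewrite mul1l. apply inv_uniq, refl_tt, Ht. }
  rewrite E. destruct (eta w t); reflexivity.
Qed.

Lemma par_del l x : par l x = true -> exists l1 i l2, l = l1 ++ i :: l2 /\
   x = gmul (gmul (ginv (ev l2)) (s i)) (ev l2).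
Proof.
  induction l as [|i l IH]; simpl; [discriminate|].
  intros H. destruct (par l x) eqn:E.
  - destruct (IH eq_refl) as [l1 [k [l2 [-> Hx]]]]. exists (i :: l1), k, l2. split; [reflexivity|exact Hx].
  - simpl in H. apply (proj1 (dec_spec _)) in H. exists [], i, l. split; [reflexivity|exact H].
Qed.
Lemma del_ev l1 i l2 : gmul (ev (l1 ++ i :: l2)) (gmul (gmul (ginv (ev l2)) (s i)) (ev l2))
   = ev (l1 ++ l2).
Proof.
  rewrite !ev_app, ev_cons. rewrite <- !mulA. f_equal. rewrite mulA, mulA, mulKr', sK'. reflexivity.
Qed.


Lemma sec w t l : reflection s t -> len (gmul w t) < len w -> ev l = w ->
  exists l1 i l2, l = l1 ++ i :: l2 /\ t = gmul (gmul (ginv (ev l2)) (s i)) (ev l2) /\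
     gmul w t = ev (l1 ++ l2).
Proof.
  intros Ht Hlt Hl.
  assert (He : eta w t = true).
  { destruct (eta w t) eqn:He; auto. exfalso.
    pose proof (eta_wt w t Ht) as H1. rewrite He in H1. simpl in H1.
    destruct (len_word (gmul w t)) as [l' [H2 H3]].
    rewrite <- H3, eta_word in H1. destruct (par_del _ _ H1) as [l1 [i [l2 [-> Hx]]]].
    pose proof (del_ev l1 i l2) as H4. rewrite <- Hx, H3, <- mulA, refl_tt, mul1r in H4 by auto.
    pose proof (len_le (l1 ++ l2)) as H5. rewrite <- H4 in H5.
    rewrite length_app in H2, H5. simpl in H2. lia. }
  rewrite <- Hl, eta_word in He. destruct (par_del _ _ He) as [l1 [i [l2 [-> Hx]]]].
  exists l1, i, l2. split; [reflexivity|]. split; [exact Hx|].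
  rewrite <- Hl, Hx. apply del_ev.
Qed.

Lemma lemE u t k : reflection s t -> len u < len (gmul u t) ->
  len (gmul (gmul u t) (s k)) < len (gmul u t) -> t <> s k ->
  len (gmul u (s k)) < len (gmul (gmul u t) (s k)).
Proof.
  intros Ht H1 H2 Hne. set (u1 := gmul u t) in *.
  destruct (len_word (gmul u1 (s k))) as [l' [Hl' Hev]].
  assert (Hl : ev (l' ++ [k]) = u1) by (rewrite ev_snoc, Hev, sK; reflexivity).
  assert (Hu : gmul u1 t = u) by (unfold u1; rewrite <- mulA, refl_tt, mul1r by auto; reflexivity).
  assert (Hlt : len (gmul u1 t) < len u1) by (rewrite Hu; exact H1).
  destruct (sec _ _ _ Ht Hlt Hl) as [l1 [i [l2 [E [Et Eu]]]]].
  rewrite Hu in Eu.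
  destruct l2 as [|x l2'] using rev_ind.
  - apply app_inj_tail in E. destruct E as [-> ->]. simpl in Et.
    rewrite inv1, mul1l, mul1r in Et. contradiction.
  - clear IHl2'. rewrite app_comm_cons, app_assoc in E. apply app_inj_tail in E.
    destruct E as [E Ex]. subst x. rewrite app_assoc, ev_snoc in Eu. rewrite Eu, sK.
    pose proof (len_le (l1 ++ l2')) as H3. pose proof (len_s_cases u1 k).
    rewrite E, length_app in Hl'. simpl in Hl'. rewrite length_app in H3. lia.
Qed.


Lemma conj_step u t k : gmul (gmul u (s k)) (gmul (gmul (s k) t) (s k)) = gmul (gmul u t) (s k).
Proof. rewrite !mulA, sK. reflexivity. Qed.

Lemma Z1 u y k : ble u y -> len u < len (gmul u (s k)) -> len y < len (gmul y (s k)) ->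
  ble (gmul u (s k)) (gmul y (s k)).
Proof.
  intros H. apply clos_rt_rt1n in H. induction H as [u|u u1 y Hst Hch IH]; intros H1 H2.
  - apply ble_refl.
  - apply clos_rt1n_rt in Hch. destruct Hst as [t [Ht [-> Hl]]].
    destruct (classic (t = s k)) as [->|Hne].
    + apply (ble_trans _ y). exact Hch. apply ble_s, H2.
    + destruct (len_s_cases (gmul u t) k) as [A|A].
      * apply (ble_trans _ (gmul (gmul u t) (s k))); [|apply IH; auto; lia].
        rewrite <- conj_step. apply ble_step. apply refl_conj, Ht.
        rewrite conj_step. pose proof (len_mul_s_le u k). lia.
      * pose proof (lemE u t k Ht Hl ltac:(lia) Hne) as HE.
        apply (ble_trans _ (gmul (gmul u t) (s k))).
        rewrite <- conj_step. apply ble_step. apply refl_conj, Ht. rewrite conj_step. exact HE.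
        apply (ble_trans _ (gmul u t)). apply ble_s'. lia.
        apply (ble_trans _ y). exact Hch. apply ble_s, H2.
Qed.

Lemma LZ u y k : ble u y ->
  (len u < len (gmul u (s k)) -> len (gmul y (s k)) < len y -> ble u (gmul y (s k))) /\
  (len (gmul u (s k)) < len u -> len (gmul y (s k)) < len y -> ble (gmul u (s k)) (gmul y (s k))).
Proof.
  intros H. apply clos_rt_rt1n in H. induction H as [u|u u1 y Hst Hch IH].
  - split; intros; [lia|apply ble_refl].
  - apply clos_rt1n_rt in Hch. destruct Hst as [t [Ht [-> Hl]]]. destruct IH as [IH1 IH2].
    split; intros H1 H2.
    + destruct (len_s_cases (gmul u t) k) as [A|A].
      * apply (ble_trans _ (gmul u t)). apply ble_step; auto. apply IH1; auto; lia.
      * specialize (IH2 ltac:(lia) H2).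
        destruct (classic (t = s k)) as [->|Hne].
        -- rewrite sK in IH2. exact IH2.
        -- pose proof (lemE u t k Ht Hl ltac:(lia) Hne) as HE.
           apply (ble_trans _ (gmul u (s k))). apply ble_s, H1.
           apply (ble_trans _ (gmul (gmul u t) (s k))); [|exact IH2].
           rewrite <- conj_step. apply ble_step. apply refl_conj, Ht. rewrite conj_step. exact HE.
    + destruct (len_s_cases (gmul u t) k) as [A|A].
      * apply (ble_trans _ u). apply ble_s'. exact H1.
        apply (ble_trans _ (gmul u t)). apply ble_step; auto. apply IH1; auto; lia.
      * specialize (IH2 ltac:(lia) H2).
        destruct (classic (t = s k)) as [->|Hne].
        -- lia.
        -- apply (ble_trans _ (gmul (gmul u t) (s k))); [|exact IH2].
           rewrite <- conj_step. apply ble_step. apply refl_conj, Ht. rewrite conj_step. lia.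
Qed.


Lemma par_word (J : I -> Prop) z : parabolic s J z -> exists l, Forall J l /\ ev l = z.
Proof.
  induction 1 as [|j Hj|x y _ [l1 [F1 E1]] _ [l2 [F2 E2]]|x _ [l [F E]]].
  - exists []. split; [constructor|reflexivity].
  - exists [j]. split; [constructor; auto|]. simpl. apply mul1r.
  - exists (l1 ++ l2). split. apply Forall_app; auto. rewrite ev_app, E1, E2. reflexivity.
  - exists (rev l). split. apply Forall_rev; auto. rewrite ev_rev, E. reflexivity.
Qed.

Lemma lemQ (J : I -> Prop) v : (forall j, J j -> len v < len (gmul v (s j))) ->
  forall l, Forall J l -> forall x, ble v (gmul x (ev l)) -> ble v x.
Proof.
  intros Hv l HF. induction HF as [|j l Hj HF IH]; intros x H.
  - simpl in H. rewrite mul1r in H. exact H.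
  - rewrite ev_cons, mulA in H. apply IH in H.
    destruct (len_s_cases x j) as [A|A].
    + pose proof (proj1 (LZ v (gmul x (s j)) j H) (Hv j Hj)) as H'. rewrite sK in H'.
      apply H'. lia.
    + apply (ble_trans _ _ _ H). apply ble_s'. lia.
Qed.

Lemma lemP (J : I -> Prop) y : exists x z, y = gmul x z /\ parabolic s J z /\
  (forall j, J j -> ~ len (gmul x (s j)) < len x) /\ ble x y.
Proof.
  remember (len y) as n eqn:Hn. revert y Hn.
  induction n as [n IH] using lt_wf_ind. intros y Hn.
  destruct (classic (exists j, J j /\ len (gmul y (s j)) < len y)) as [[j [Hj Hlt]]|Hno].
  - destruct (IH (len (gmul y (s j))) ltac:(lia) _ eq_refl) as [x [z [E [Hz [Hx Hxy]]]]].
    exists x, (gmul z (s j)). split; [|split; [|split]].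
    + rewrite mulA, <- E, sK. reflexivity.
    + apply par_mul; auto. apply par_gen, Hj.
    + exact Hx.
    + apply (ble_trans _ _ _ Hxy). apply ble_s', Hlt.
  - exists y, gone. split; [|split; [|split]].
    + symmetry; apply mul1r.
    + apply par_one.
    + intros j Hj Hlt. apply Hno. exists j. auto.
    + apply ble_refl.
Qed.

Lemma desc_exists x : x <> gone -> exists i, len (gmul x (s i)) < len x.
Proof.
  intros Hx. destruct (len_word x) as [l [Hl E]].
  destruct l as [|i l'] using rev_ind.
  - simpl in E. exfalso; apply Hx; symmetry; exact E.
  - exists i. subst x. rewrite ev_snoc in *. rewrite sK. pose proof (len_le l').
    rewrite length_app in Hl. simpl in Hl. lia.
Qed.

Lemma main (w : W) (k : I) : w <> gone ->
    (forall i, in_DR s (gmul w (s k)) i <-> i = k) ->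
    forall y : W,
      Annex s (gmul w (s k)) y <->
      exists x z, Annex s w x /\ parabolic s (fun j => j <> k) z /\ y = gmul x z.
Proof.
  intros Hw1 HD y. set (v := gmul w (s k)).
  assert (Hwv : len w < len v).
  { pose proof (proj2 (HD k) eq_refl) as H. unfold in_DR in H. fold v in H.
    unfold v in H at 1. rewrite sK in H. exact H. }
  assert (HvJ : forall j, j <> k -> len v < len (gmul v (s j))).
  { intros j Hj. destruct (len_s_cases v j) as [A|A]. lia.
    exfalso. apply Hj. apply HD. unfold in_DR. fold v. lia. }
  assert (Hble : ble w v) by (apply ble_s, Hwv).
  split.
  - intros Hy. destruct (lemP (fun j => j <> k) y) as [x [z [Ey [Hz [Hx Hxy]]]]].
    exists x, z. split; [|split; auto]. intros Hwx.
    destruct (classic (len (gmul x (s k)) < len x)) as [Hk|Hk].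
    + pose proof (proj1 (LZ w x k Hwx) Hwv Hk) as H1.
      pose proof (Z1 _ _ k H1 Hwv) as H2. rewrite sK in H2. specialize (H2 Hk).
      apply Hy. apply (ble_trans _ _ _ H2 Hxy).
    + assert (Hx1 : x = gone).
      { destruct (classic (x = gone)) as [|Hne]; auto. exfalso.
        destruct (desc_exists x Hne) as [i Hi].
        destruct (classic (i = k)) as [->|Hik]. apply Hk, Hi. apply (Hx i Hik Hi). }
      subst x. apply Hw1. apply ble_one, Hwx.
  - intros [x [z [Hax [Hz Ey]]]] Hvy. subst y.
    destruct (par_word _ _ Hz) as [l [HF El]]. subst z.
    apply Hax. apply (ble_trans _ _ _ Hble). apply (lemQ _ v HvJ l HF x Hvy).
Qed.

End Cox.



Theorem proposition3p14 (W : Group) (I : Type) (s : I -> W) :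
  is_coxeter_system W I s ->
  forall (w : W) (k : I),
    w <> gone ->
    ~ in_DR s w k ->
    (forall i, in_DR s (gmul w (s k)) i <-> i = k) ->
    forall y : W,
      Annex s (gmul w (s k)) y <->
      exists x z, Annex s w x /\ parabolic s (fun j => j <> k) z /\ y = gmul x z.
Proof.
  intros [mm [Hmat [Hrel Huniv]]] w k Hw _ HD y.
  exact (main s mm Hmat Hrel Huniv w k Hw HD y).
Qed.
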